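(* Suppose the total Pauli channel is a composition of independent single-Pauli channels, $$\mathcal N(\rho)=\circ_{e\in\mathcal E_\Gamma}\mathcal N^{(e)}(\rho),\qquad \mathcal N^{(e)}(\rho)=(1-p_e)\rho+p_e\,e\rho e^\dagger,$$ with $0<p_e<1/2$. Then for every nontrivial syndrome class $C$, the detector error rate $P^{\mathrm{detect}}_C$, i.e. the probability that an odd number of the errors in $C$ occur, can be learned exactly from the syndrome expectation values $\Lambda(M)$, $M\in\mathcal M$.
   Context: $\mathcal P_n$ is the $n$-qubit Pauli group without phases; $[[A,B]]=\pm1$ according to commutation, $\langle A,B\rangle\in\{0,1\}$ is $0$ iff they commute. $\mathcal E_\Gamma$ is a finite list of non-identity Pauli errors (the same operator may appear several times as distinct elements). A stabilizer code has measured stabilizer subgroup $\mathcal M$; codewords are prepared, the channel applied and $\mathcal M$'s generators measured perfectly, giving syndrome expectation values $\Lambda(M)=\sum_eP(e)[[e,M]]$ where $P$ is the total error distribution. Syndrome classes partition $\mathcal E_\Gamma$ by equality of $(\langle e,M\rangle)_{M\in\mathcal M}$; a class is nontrivial if its syndrome is nonzero. ''Learned exactly'' means uniquely determined by the values $(\Lambda(M))_{M\in\mathcal M}$ among all channels of the stated form. *)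

(* Defs.v *)
From HB Require Import structures.
From mathcomp Require Import all_boot all_order all_algebra.
From mathcomp Require Import reals.
Set Implicit Arguments. Unset Strict Implicit. Unset Printing Implicit Defensive.
Import Order.TTheory GRing.Theory Num.Theory.
Local Open Scope ring_scope.

(* n-qubit Paulis without phases: each qubit carries (x-bit, z-bit);
   (0,0)=I, (1,0)=X, (0,1)=Z, (1,1)=Y. *)
Definition pauli (n : nat) := {ffun 'I_n -> bool * bool}.

Definition pid (n : nat) : pauli n := [ffun => (false, false)].

Definition pmul (n : nat) (a b : pauli n) : pauli n :=
  [ffun k => ((a k).1 (+) (b k).1, (a k).2 (+) (b k).2)].

(* <A,B> in {0,1}: false iff A and B commute (symplectic form) *)
Definition sympl (n : nat) (a b : pauli n) : bool :=
  \big[addb/false]_(k < n) (((a k).1 && (b k).2) (+) ((a k).2 && (b k).1)).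

Definition commsign (R : ringType) (n : nat) (a b : pauli n) : R :=
  (-1) ^+ sympl a b.

Definition stab_group (n : nat) (Ms : {set pauli n}) : Prop :=
  [/\ pid n \in Ms,
      (forall a b, a \in Ms -> b \in Ms -> pmul a b \in Ms) &
      (forall a b, a \in Ms -> b \in Ms -> sympl a b = false)].

(* Error list E_Gamma = (e i)_{i < m}; a set S of indices = the errors that
   occurred. Independent single-Pauli channels with probabilities p i. *)
Definition weight (R : ringType) (m : nat) (p : 'I_m -> R) (S : {set 'I_m}) : R :=
  (\prod_(i in S) p i) * \prod_(i in ~: S) (1 - p i).

Definition errprod (n m : nat) (e : 'I_m -> pauli n) (S : {set 'I_m}) : pauli n :=
  [ffun k => (\big[addb/false]_(i in S) (e i k).1,
              \big[addb/false]_(i in S) (e i k).2)].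

Definition Perr (R : ringType) (n m : nat) (e : 'I_m -> pauli n) (p : 'I_m -> R)
  (f : pauli n) : R :=
  \sum_(S : {set 'I_m} | errprod e S == f) weight p S.

Definition Lambda (R : ringType) (n m : nat) (e : 'I_m -> pauli n) (p : 'I_m -> R)
  (M : pauli n) : R :=
  \sum_(f : pauli n) Perr e p f * commsign R f M.

Definition synd_class (n m : nat) (Ms : {set pauli n}) (e : 'I_m -> pauli n)
  (i : 'I_m) : {set 'I_m} :=
  [set j | [forall M in Ms, sympl (e j) M == sympl (e i) M]].

Definition nontrivial_synd (n m : nat) (Ms : {set pauli n}) (e : 'I_m -> pauli n)
  (i : 'I_m) : bool :=
  [exists M in Ms, sympl (e i) M].

Definition Pdetect (R : ringType) (m : nat) (p : 'I_m -> R) (C : {set 'I_m}) : R :=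
  \sum_(S : {set 'I_m} | odd #|S :&: C|) weight p S.

(* Main.v *)
Require Import Defs.
From HB Require Import structures.
From mathcomp Require Import all_boot all_order all_algebra.
From mathcomp Require Import reals ring lra.
Set Implicit Arguments. Unset Strict Implicit. Unset Printing Implicit Defensive.
Import Order.TTheory GRing.Theory Num.Theory.
Local Open Scope ring_scope.

Lemma sum_weight (R : comRingType) m (p s : 'I_m -> R) :
  \sum_(S : {set 'I_m}) weight p S * \prod_(j in S) s j =
  \prod_j (p j * s j + (1 - p j)).
Proof.
rewrite bigA_distr; apply: eq_bigr => S _.
rewrite [RHS](bigID (fun i => i \in S)) /= /weight.
have -> : \prod_(i | ~~ (i \in S)) (if i \in S then p i * s i else 1 - p i)
   = \prod_(i in ~: S) (1 - p i).
  by apply: eq_big => [i|i /negbTE ->]; rewrite ?in_setC.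
have -> : \prod_(i | i \in S) (if i \in S then p i * s i else 1 - p i)
   = \prod_(i in S) (p i * s i) by apply: eq_bigr => i ->.
by rewrite big_split /= -!mulrA [X in _ * X = _]mulrC.
Qed.

Lemma xor_and_l (I : finType) (P : pred I) (x : I -> bool) y :
  (\big[addb/false]_(i | P i) x i) && y = \big[addb/false]_(i | P i) (x i && y).
Proof.
elim/big_rec2: _ => //= i a b _ <-; by rewrite andb_addl.
Qed.
Lemma xor_and_r (I : finType) (P : pred I) (x : I -> bool) y :
  y && (\big[addb/false]_(i | P i) x i) = \big[addb/false]_(i | P i) (y && x i).
Proof.
elim/big_rec2: _ => //= [|i a b _ <-]; first by rewrite andbF.
by rewrite andb_addr.
Qed.

Lemma sympl_errprod n m (e : 'I_m -> pauli n) S M :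
  sympl (errprod e S) M = \big[addb/false]_(j in S) sympl (e j) M.
Proof.
rewrite /sympl [RHS](exchange_big_dep xpredT) //=.
apply: eq_bigr => k _; rewrite !ffunE /= !xor_and_l.
rewrite -big_split /=; apply: eq_bigl => i; by rewrite andbT.
Qed.

Lemma sympl_pmul n (a b c : pauli n) :
  sympl a (pmul b c) = sympl a b (+) sympl a c.
Proof.
rewrite /sympl -big_split /=; apply: eq_bigr => k _; rewrite !ffunE /=.
by case: (a k).1; case: (a k).2; case: (b k).1; case: (b k).2;
   case: (c k).1; case: (c k).2.
Qed.

Lemma pmulK n (a b : pauli n) : pmul a (pmul a b) = b.
Proof.
apply/ffunP => k; rewrite !ffunE /= !addbA !addbb /=.
by case: (b k).
Qed.

Lemma sign_xor (R : ringType) (I : finType) (P : pred I) (x : I -> bool) :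
  (-1) ^+ (\big[addb/false]_(i | P i) x i) = \prod_(i | P i) ((-1) ^+ x i) :> R.
Proof.
elim/big_rec2: _ => //= i a b _ <-; by rewrite signr_addb.
Qed.

Lemma Lambda_prod (R : comRingType) n m (e : 'I_m -> pauli n) (p : 'I_m -> R) M :
  Lambda e p M = \prod_j (if sympl (e j) M then 1 - 2 * p j else 1).
Proof.
rewrite /Lambda /Perr.
transitivity (\sum_S weight p S * commsign R (errprod e S) M).
  symmetry; rewrite (partition_big (errprod e) xpredT) //=.
  apply: eq_bigr => f _; rewrite big_distrl /=.
  by apply: eq_bigr => S /eqP ->.
transitivity (\sum_(S : {set 'I_m}) weight p S *
   \prod_(j in S) (if sympl (e j) M then -1 else 1) : R).
  apply: eq_bigr => S _; rewrite /commsign sympl_errprod sign_xor.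
  by congr (_ * _); apply: eq_bigr => j _; case: sympl.
rewrite sum_weight; apply: eq_bigr => j _.
case: sympl; rewrite ?mulr1 ?mulrN1; ring.
Qed.

Lemma prod_if_card (R : comRingType) (T : finType) (P Q : pred T) (a : R) :
  \prod_(M | P M) (if Q M then a else 1) = a ^+ #|[set M | P M && Q M]|.
Proof.
rewrite -prodr_const big_mkcond [RHS]big_mkcond /=.
by apply: eq_bigr => M _; rewrite inE; case: (P M); case: (Q M).
Qed.

Lemma Pdetect_formula (R : comRingType) m (p : 'I_m -> R) (C : {set 'I_m}) :
  2 * Pdetect p C = 1 - \prod_(j in C) (1 - 2 * p j).
Proof.
have H1 : \sum_(S : {set 'I_m}) weight p S = 1.
  transitivity (\sum_(S : {set 'I_m}) weight p S * \prod_(j in S) (fun _ => 1 : R) j).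
    by apply: eq_bigr => S _; rewrite big1 ?mulr1.
  by rewrite sum_weight big1 // => j _; rewrite mulr1 addrC subrK.
have H2 : \sum_(S : {set 'I_m}) weight p S * (-1) ^+ odd #|S :&: C|
          = \prod_(j in C) (1 - 2 * p j).
  transitivity (\sum_(S : {set 'I_m}) weight p S *
      \prod_(j in S) (fun j => if j \in C then -1 else 1 : R) j).
    apply: eq_bigr => S _; congr (_ * _).
    by rewrite signr_odd prod_if_card; congr (_ ^+ #|_|); apply/setP => j; rewrite !inE.
  rewrite sum_weight [RHS]big_mkcond; apply: eq_bigr => j _.
  case: (j \in C); rewrite ?mulr1 ?mulrN1 //; ring.
rewrite -H2 -[X in _ = X - _]H1 /Pdetect [X in _ = X - _](bigID (fun S : {set 'I_m} => odd #|S :&: C|)) /=.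
rewrite [X in _ = _ - X](bigID (fun S : {set 'I_m} => odd #|S :&: C|)) /=.
have -> : \sum_(S | odd #|S :&: C|) weight p S * (-1) ^+ odd #|S :&: C|
   = - \sum_(S | odd #|S :&: C|) weight p S.
  by rewrite -sumrN; apply: eq_bigr => S ->; rewrite mulrN1.
have -> : \sum_(S | ~~ odd #|S :&: C|) weight p S * (-1) ^+ odd #|S :&: C|
   = \sum_(S | ~~ odd #|S :&: C|) weight p S.
  by apply: eq_bigr => S /negbTE ->; rewrite mulr1.
ring.
Qed.

Lemma count_lemma n m (Ms : {set pauli n}) (e : 'I_m -> pauli n) i j :
  stab_group Ms -> nontrivial_synd Ms e i ->
  #|[set M | (M \in Ms) && sympl (e i) M && sympl (e j) M]| =
  (#|[set M | (M \in Ms) && ~~ sympl (e i) M && sympl (e j) M]|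
   + (j \in synd_class Ms e i) * #|[set M | (M \in Ms) && sympl (e i) M]|)%N.
Proof.
case=> _ Mmul _ /existsP [Mi /andP [MiMs siMi]].
case: (boolP (j \in synd_class Ms e i)) => [jC|jC].
  have eqs : forall M, M \in Ms -> sympl (e j) M = sympl (e i) M.
    by move=> M MMs; move: jC; rewrite inE => /forallP /(_ M); rewrite MMs => /eqP.
  rewrite mul1n.
  have -> : [set M | (M \in Ms) && ~~ sympl (e i) M && sympl (e j) M] = set0.
    apply/setP => M; rewrite !inE; case: (boolP (M \in Ms)) => //= MMs.
    by rewrite eqs // andNb.
  rewrite cards0 add0n; apply: eq_card => M; rewrite !inE.
  case: (boolP (M \in Ms)) => //= MMs; by rewrite eqs // andbb.
rewrite mul0n addn0.
have [M' M'Ms /andP [siM' sjM']] :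
    exists2 M', M' \in Ms & sympl (e i) M' && ~~ sympl (e j) M'.
  case: (boolP (sympl (e j) Mi)) => sjMi; last by exists Mi; rewrite ?siMi.
  move: jC; rewrite inE => /forallPn [M0]; rewrite negb_imply => /andP [M0Ms].
  case: (boolP (sympl (e i) M0)) => siM0.
    by move=> ne; exists M0 => //; rewrite siM0 /=; apply: contra ne => ->.
  move=> ne; exists (pmul Mi M0); first exact: Mmul.
  rewrite !sympl_pmul siMi sjMi (negbTE siM0) /=.
  by move: ne; case: sympl.
rewrite -(card_imset _ (can_inj (pmulK M'))); apply: eq_card => M.
rewrite inE; apply/imsetP/idP.
  case=> X; rewrite inE => /andP [/andP [XMs siX] sjX] ->.
  rewrite Mmul //= !sympl_pmul siM' siX sjX /=.
  by rewrite (negbTE sjM').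
move=> /andP [/andP [MMs siM] sjM]; exists (pmul M' M); last by rewrite pmulK.
rewrite inE Mmul //= !sympl_pmul siM' (negbTE siM) (negbTE sjM') sjM.
by [].
Qed.

Lemma prod_split (R : comRingType) n m (Ms : {set pauli n}) (e : 'I_m -> pauli n)
  (r : 'I_m -> R) i :
  stab_group Ms -> nontrivial_synd Ms e i ->
  \prod_(M | (M \in Ms) && sympl (e i) M) Lambda e r M =
  \prod_(M | (M \in Ms) && ~~ sympl (e i) M) Lambda e r M *
  (\prod_(j in synd_class Ms e i) (1 - 2 * r j))
     ^+ #|[set M | (M \in Ms) && sympl (e i) M]|.
Proof.
move=> SG NT.
under eq_bigr => M _ do rewrite Lambda_prod.
under [X in _ = X * _]eq_bigr => M _ do rewrite Lambda_prod.
rewrite exchange_big [X in _ = X * _]exchange_big /=.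
under eq_bigr => j _ do rewrite prod_if_card (count_lemma j SG NT) exprD.
under [X in _ = X * _]eq_bigr => j _ do rewrite prod_if_card.
rewrite big_split /= -prodrXl; congr (_ * _).
rewrite [RHS]big_mkcond /=; apply: eq_bigr => j _.
by case: (j \in synd_class Ms e i); rewrite ?mul1n ?mul0n ?expr0.
Qed.

Theorem lemma7 (R : realType) (n m : nat) (Ms : {set pauli n})
  (e : 'I_m -> pauli n) :
  stab_group Ms ->
  (forall i, e i != pid n) ->
  forall p q : 'I_m -> R,
  (forall i, 0 < p i < 2^-1) ->
  (forall i, 0 < q i < 2^-1) ->
  (forall M, M \in Ms -> Lambda e p M = Lambda e q M) ->
  forall i : 'I_m, nontrivial_synd Ms e i ->
  Pdetect p (synd_class Ms e i) = Pdetect q (synd_class Ms e i).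
Proof.
move=> SG _ p q Hp Hq HL i NT.
have pos : forall r : 'I_m -> R, (forall i, 0 < r i < 2^-1) ->
    forall j, 0 < 1 - 2 * r j.
  move=> r Hr j; have /andP [_ h] := Hr j; lra.
set C := synd_class Ms e i.
set N := #|[set M | (M \in Ms) && sympl (e i) M]|.
have Npos : (0 < N)%N.
  case/existsP: NT => M /andP [MMs sM]; apply/card_gt0P; exists M; by rewrite inE MMs.
have LP : forall r : 'I_m -> R, (forall i, 0 < r i < 2^-1) ->
    forall M, 0 < Lambda e r M.
  move=> r Hr M; rewrite Lambda_prod; apply: prodr_gt0 => j _.
  by case: sympl => //; apply: pos.
have X : \prod_(j in C) (1 - 2 * p j) = \prod_(j in C) (1 - 2 * q j).
  have E1 := prod_split p SG NT; have E2 := prod_split q SG NT.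
  have A : \prod_(M | (M \in Ms) && sympl (e i) M) Lambda e p M =
           \prod_(M | (M \in Ms) && sympl (e i) M) Lambda e q M.
    by apply: eq_bigr => M /andP [MMs _]; apply: HL.
  have B : \prod_(M | (M \in Ms) && ~~ sympl (e i) M) Lambda e p M =
           \prod_(M | (M \in Ms) && ~~ sympl (e i) M) Lambda e q M.
    by apply: eq_bigr => M /andP [MMs _]; apply: HL.
  rewrite -/C -/N in E1 E2.
  rewrite E1 E2 B in A.
  have Bne : \prod_(M | (M \in Ms) && ~~ sympl (e i) M) Lambda e q M != 0.
    by apply/lt0r_neq0/prodr_gt0 => M _; apply: LP.
  have := mulfI Bne A => /eqP; rewrite eqrXn2 //; first by move/eqP.
    by apply/ltW/prodr_gt0 => j _; apply: pos.
  by apply/ltW/prodr_gt0 => j _; apply: pos.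
have := Pdetect_formula p C; rewrite X -(Pdetect_formula q C).
by move/(mulfI (x:=2:R)); apply; rewrite pnatr_eq0.
Qed.
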